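(* Let $g\in\mathscr{B}$ and, for $\lambda\in\mathbb{D}\setminus\{0\}$ and $\gamma>0$, let $f_{\gamma,\lambda}(z)=\dfrac{z}{(1-\bar\lambda z)^\gamma}$, $z\in\mathbb{D}$. Then: (a) For every $k\in\mathbb{N}$ and $t\in[0,1]$, \[ |T_g^kf_{\gamma,\lambda}(t\lambda)|\le\frac{\|g\|_{\mathscr{B}}^k}{|\lambda|^k\gamma^k(1-t|\lambda|^2)^\gamma}. \] (b) If $a_0,\dots,a_n\in\mathbb{C}$ and $\gamma|\lambda|>\|g\|_{\mathscr{B}}$, then \[ \Bigl|\sum_{k=0}^na_kT_g^kf_{\gamma,\lambda}(\lambda)\Bigr|\le|a_0|\frac{|\lambda|}{(1-|\lambda|^2)^\gamma}+\Bigl(\sum_{k=1}^n|a_k|\Bigr)\frac{\|g\|_{\mathscr{B}}}{|\lambda|\gamma(1-|\lambda|^2)^\gamma}. \]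
   Context: $\mathbb{D}$ is the unit disc. $\mathscr{B}$ is the Bloch space of analytic $g$ on $\mathbb{D}$ with $\|g\|_{\mathscr{B}}=\sup_{z\in\mathbb{D}}(1-|z|^2)|g'(z)|<\infty$. $T_gf(z)=\int_0^zf(\zeta)g'(\zeta)\,d\zeta$, $T_g^0$ is the identity. The power $(1-\bar\lambda z)^\gamma$ is defined with the principal branch of the logarithm. *)

(* Defs.v *)
From Stdlib Require Import Reals.
From Coquelicot Require Import Coquelicot.

Open Scope R_scope.

(* Principal argument Arg w in (-PI, PI] (the usual atan2). *)
Definition Arg (w : C) : R :=
  let x := fst w in let y := snd w in
  match Rlt_dec 0 x with
  | left _ => atan (y / x)
  | right _ =>
    match Rlt_dec 0 y with
    | left _ => PI / 2 - atan (x / y)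
    | right _ =>
      match Rlt_dec y 0 with
      | left _ => - (PI / 2) - atan (x / y)
      | right _ => match Rlt_dec x 0 with left _ => PI | right _ => 0 end
      end
    end
  end.

(* Principal power w^gamma = exp(gamma * Log w), Log the principal logarithm
   Log w = ln|w| + i Arg w  (w <> 0). *)
Definition cpow (w : C) (gamma : R) : C :=
  match Req_EM_T (Cmod w) 0 with
  | left _ => RtoC 0
  | right _ =>
    Cmult (RtoC (exp (gamma * ln (Cmod w))))
          (cos (gamma * Arg w), sin (gamma * Arg w))
  end.

Definition inD (z : C) : Prop := Cmod z < 1.

Definition in_Bloch (g' : C -> C) : Prop :=
  exists M : R, forall z : C, inD z -> (1 - Cmod z ^ 2) * Cmod (g' z) <= M.

Definition bloch_norm (g' : C -> C) : R :=
  real (Lub_Rbar (fun r => exists z : C, inD z /\ r = (1 - Cmod z ^ 2) * Cmod (g' z))).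

(* T_g f (z) = int_0^z f(zeta) g'(zeta) dzeta, along the segment [0,z]:
   = int_0^1 f(s z) g'(s z) z ds. *)
Definition Tg (g' : C -> C) (f : C -> C) (z : C) : C :=
  RInt (V := C_R_CompleteNormedModule)
       (fun s : R => Cmult (Cmult (f (Cmult (RtoC s) z)) (g' (Cmult (RtoC s) z))) z) 0 1.

Fixpoint Tgk (g' : C -> C) (k : nat) (f : C -> C) : C -> C :=
  match k with
  | O => f
  | S k' => Tg g' (Tgk g' k' f)
  end.

Definition f_gl (gamma : R) (lam : C) (z : C) : C :=
  Cdiv z (cpow (Cminus (RtoC 1) (Cmult (Cconj lam) z)) gamma).

(* Main.v *)
Require Import Defs.
From Stdlib Require Import Reals Lra Lia Classical.
From Coquelicot Require Import Coquelicot.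
Open Scope R_scope.

Lemma bloch_facts (g' : C -> C) : in_Bloch g' ->
  (forall z, inD z -> (1 - Cmod z ^ 2) * Cmod (g' z) <= bloch_norm g') /\ 0 <= bloch_norm g'.
Proof.
  intros [M HM]. unfold bloch_norm.
  set (E := fun r => exists z : C, inD z /\ r = (1 - Cmod z ^ 2) * Cmod (g' z)).
  destruct (Lub_Rbar_correct E) as [Hub Hl].
  assert (Hfin : exists r, Lub_Rbar E = Finite r /\ (forall x, E x -> x <= r)).
  { assert (H0 : E ((1 - Cmod 0 ^ 2) * Cmod (g' 0))).
    { exists 0%C. split; [|reflexivity]. unfold inD. rewrite Cmod_0. lra. }
    assert (HM' : Rbar_le (Lub_Rbar E) M).
    { apply Hl. intros x [z [Hz ->]]. simpl. apply HM; auto. }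
    pose proof (Hub _ H0) as H1.
    destruct (Lub_Rbar E) as [r| |]; simpl in *; try contradiction.
    exists r; split; auto. }
  destruct Hfin as [r [Hr Hub']]. rewrite Hr. simpl. split.
  - intros z Hz. apply Hub'. exists z; auto.
  - apply Rle_trans with ((1 - Cmod 0 ^ 2) * Cmod (g' 0)).
    + rewrite Cmod_0. apply Rmult_le_pos. lra. apply Cmod_ge_0.
    + apply Hub'. exists 0%C. split; [|reflexivity]. unfold inD. rewrite Cmod_0. lra.
Qed.

Lemma cpow_pos (x gamma : R) : 0 < x -> cpow (RtoC x) gamma = RtoC (Rpower x gamma).
Proof.
  intros Hx. unfold cpow. rewrite Cmod_R, Rabs_pos_eq by lra.
  destruct (Req_EM_T x 0) as [e|_]; [lra|].
  unfold Arg. simpl. destruct (Rlt_dec 0 x) as [_|n]; [|lra].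
  unfold Rdiv. rewrite Rmult_0_l, atan_0, Rmult_0_r, cos_0, sin_0.
  unfold Rpower, RtoC, Cmult. simpl. f_equal; ring.
Qed.

Lemma conj_ray (t : R) (lam : C) :
  Cmult (Cconj lam) (Cmult (RtoC t) lam) = RtoC (t * Cmod lam ^ 2).
Proof.
  rewrite Cmod2_alt. destruct lam as [a b]. unfold Cmult, Cconj, RtoC. simpl. f_equal; ring.
Qed.

Lemma f_gl_ray (gamma t : R) (lam : C) : 0 <= t <= 1 -> Cmod lam < 1 ->
  Cmod (f_gl gamma lam (Cmult (RtoC t) lam)) = t * Cmod lam / Rpower (1 - t * Cmod lam ^ 2) gamma.
Proof.
  intros Ht Hl. unfold f_gl.
  assert (Hpos : 0 < 1 - t * Cmod lam ^ 2).
  { pose proof (Cmod_ge_0 lam). assert (Cmod lam ^ 2 < 1) by nra. nra. }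
  replace (Cminus (RtoC 1) (Cmult (Cconj lam) (Cmult (RtoC t) lam))) with (RtoC (1 - t * Cmod lam ^ 2)).
  2:{ rewrite conj_ray. unfold Cminus, RtoC, Cplus, Copp. simpl. f_equal; ring. }
  rewrite cpow_pos by auto.
  rewrite Cmod_div. 2:{ intro E. apply (f_equal fst) in E. simpl in E. pose proof (exp_pos (gamma * ln (1 - t * Cmod lam ^ 2))). unfold Rpower in *. simpl in *. lra. }
  rewrite Cmod_mult, !Cmod_R, Rabs_pos_eq by lra. rewrite (Rabs_pos_eq (Rpower _ _)). reflexivity.
  unfold Rpower. left; apply exp_pos.
Qed.
Lemma majorant (A c gamma : R) : 0 <= c < 1 -> 0 < gamma ->
 is_RInt (fun u => A * c * exp (- gamma * ln (1 - u*c)) / (1 - u*c)) 0 1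
   (A / gamma * (exp (- gamma * ln (1 - c)) - 1)).
Proof.
  intros Hc Hg.
  set (F := fun u => A / gamma * exp (- gamma * ln (1 - u*c))).
  replace (A / gamma * (exp (- gamma * ln (1 - c)) - 1)) with (minus (F 1) (F 0)).
  2:{ unfold F, minus, plus, opp. simpl. rewrite Rmult_0_l, Rminus_0_r, ln_1, Rmult_0_r, exp_0, Rmult_1_l. ring. }
  apply (is_RInt_derive (V:=R_CompleteNormedModule) F).
  - intros x Hx. rewrite Rmin_left, Rmax_right in Hx by lra. unfold F.
    assert (0 < 1 - x * c) by nra.
    auto_derive. lra. unfold Rminus. field. split; lra.
  - intros x Hx. rewrite Rmin_left, Rmax_right in Hx by lra.
    assert (0 < 1 - x * c) by nra.
    apply (ex_derive_continuous (K:=R_AbsRing) (V:=R_NormedModule)).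
    auto_derive. repeat split; lra.
Qed.

Lemma normC (z : C) : norm (K:=R_AbsRing) (V:=C_R_NormedModule) z = Cmod z.
Proof. destruct z as [a b]. unfold Cmod. simpl. change (sqrt (Rabs a ^2 + Rabs b ^2) = sqrt (a * (a * 1) + b * (b * 1))).
 rewrite !pow2_abs. ring_simplify. reflexivity. Qed.

Lemma Lub_full (E : R -> Prop) : (forall x, E x) -> real (Lub_Rbar E) = 0.
Proof.
  intros H. destruct (Lub_Rbar_correct E) as [Hub _].
  destruct (Lub_Rbar E) as [r| |] eqn:He; try reflexivity.
  - specialize (Hub (r+1) (H _)). simpl in Hub. lra.
Qed.

Lemma RInt_not_ex (f : R -> C) a b :
  ~ ex_RInt (V:=C_R_CompleteNormedModule) f a b -> RInt (V:=C_R_CompleteNormedModule) f a b = RtoC 0.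
Proof.
  intros H. unfold RInt, iota.
  change (C_complete_lim (fun A : C -> Prop => forall x : C, is_RInt (V:=C_R_CompleteNormedModule) f a b x -> A x) = RtoC 0).
  unfold C_complete_lim, R_complete_lim. unfold RtoC. f_equal; apply Lub_full; intros x y Hy; exfalso; apply H; exists y; exact Hy.
Qed.

Lemma ray_mult (u t : R) (lam : C) : Cmult (RtoC u) (Cmult (RtoC t) lam) = Cmult (RtoC (u * t)) lam.
Proof. destruct lam as [a b]. unfold Cmult, RtoC. simpl. f_equal; ring. Qed.

Lemma Cmod_ray (t : R) (lam : C) : 0 <= t -> Cmod (Cmult (RtoC t) lam) = t * Cmod lam.
Proof. intros. rewrite Cmod_mult, Cmod_R, Rabs_pos_eq; auto. Qed.

Lemma Rpower_pos' x g : 0 < Rpower x g.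
Proof. unfold Rpower. apply exp_pos. Qed.

Lemma part_a (g' : C -> C) (gamma : R) (lam : C) :
  in_Bloch g' -> 0 < gamma -> lam <> RtoC 0 -> inD lam ->
  forall (k : nat) (t : R), 0 <= t <= 1 ->
     Cmod (Tgk g' k (f_gl gamma lam) (Cmult (RtoC t) lam))
     <= bloch_norm g' ^ k /
        (Cmod lam ^ k * gamma ^ k * Rpower (1 - t * Cmod lam ^ 2) gamma).
Proof.
  intros HB Hg Hl0 HlD.
  destruct (bloch_facts g' HB) as [Hbl HN].
  set (N := bloch_norm g') in *.
  assert (HL : 0 < Cmod lam) by (apply Cmod_gt_0; auto).
  unfold inD in HlD.
  set (L := Cmod lam) in *.
  assert (HL2 : L ^ 2 < 1) by nra.
  induction k as [|k IH]; intros t Ht.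
  - simpl Tgk. rewrite f_gl_ray by auto. fold L.
    pose proof (Rpower_pos' (1 - t * L ^ 2) gamma).
    rewrite !pow_O, !Rmult_1_l. unfold Rdiv. apply Rmult_le_compat_r.
    + left; apply Rinv_0_lt_compat; auto.
    + nra.
  - simpl Tgk. unfold Tg.
    set (h := fun s : R => Cmult (Cmult (Tgk g' k (f_gl gamma lam) (Cmult (RtoC s) (Cmult (RtoC t) lam)))
                  (g' (Cmult (RtoC s) (Cmult (RtoC t) lam)))) (Cmult (RtoC t) lam)).
    assert (Hpos : 0 < 1 - t * L ^ 2) by nra.
    pose proof (Rpower_pos' (1 - t * L ^ 2) gamma) as HP.
    assert (HLk : 0 < L ^ k) by (apply pow_lt; auto).
    assert (Hgk : 0 < gamma ^ k) by (apply pow_lt; auto).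
    assert (HNk : 0 <= N ^ k) by (apply pow_le; auto).
    destruct (classic (ex_RInt (V:=C_R_CompleteNormedModule) h 0 1)) as [Hex|Hnex].
    2:{ rewrite RInt_not_ex by auto. rewrite Cmod_0. simpl.
        apply Rmult_le_pos. nra. left. apply Rinv_0_lt_compat.
        repeat apply Rmult_lt_0_compat; auto. }
    set (c := t * L ^ 2).
    set (A := N ^ (S k) / (L ^ (S k) * gamma ^ k)).
    assert (Hc : 0 <= c < 1) by (unfold c; nra).
    apply Rle_trans with (A / gamma * (exp (- gamma * ln (1 - c)) - 1)).
    + rewrite <- normC.
      apply (norm_RInt_le (V:=C_R_NormedModule) h (fun u => A * c * exp (- gamma * ln (1 - u*c)) / (1 - u*c)) 0 1).
      * lra.
      * intros u Hu. rewrite normC. unfold h. rewrite !ray_mult.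
        rewrite !Cmod_mult. rewrite Cmod_R, Rabs_pos_eq by lra. fold L.
        assert (Hut : 0 <= u * t <= 1) by nra.
        specialize (IH (u * t) Hut).
        assert (HinD : inD (Cmult (RtoC (u * t)) lam)).
        { unfold inD. rewrite Cmod_ray by lra. fold L. nra. }
        specialize (Hbl _ HinD). rewrite Cmod_ray in Hbl by lra. fold L in Hbl.
        set (a := Cmod (Tgk g' k (f_gl gamma lam) (Cmult (RtoC (u * t)) lam))) in *.
        set (b := Cmod (g' (Cmult (RtoC (u * t)) lam))) in *.
        assert (Ha : 0 <= a) by apply Cmod_ge_0.
        assert (Hb : 0 <= b) by apply Cmod_ge_0.
        assert (Hd : 0 < 1 - u * c) by nra.
        assert (Hbd : b <= N / (1 - u * c)).
        { apply Rmult_le_reg_r with (1 - u * c); auto.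
          unfold Rdiv. rewrite Rmult_assoc, Rinv_l, Rmult_1_r by lra.
          apply Rle_trans with ((1 - (u * t * L) ^ 2) * b); [|exact Hbl].
          rewrite Rmult_comm. apply Rmult_le_compat_r; auto. unfold c. assert (0 <= (u*t*L^2)*(1-u*t)) by (apply Rmult_le_pos; nra). nra. }
        pose proof (Rpower_pos' (1 - u * t * L ^ 2) gamma) as HPu.
        assert (Hab : a * b <= (N ^ k / (L ^ k * gamma ^ k * Rpower (1 - u * t * L ^ 2) gamma)) * (N / (1 - u * c))).
        { apply Rmult_le_compat; auto. }
        apply Rle_trans with ((N ^ k / (L ^ k * gamma ^ k * Rpower (1 - u * t * L ^ 2) gamma)) * (N / (1 - u * c)) * (t * L)).
        { apply Rmult_le_compat_r; nra. }
        right.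
        replace (- gamma * ln (1 - u * c)) with (- (gamma * ln (1 - u * t * L ^ 2))).
        2:{ unfold c. ring_simplify. replace (u * t * L ^ 2) with (u * (t * L ^ 2)) by ring. reflexivity. }
        rewrite exp_Ropp. change (exp (gamma * ln (1 - u * t * L ^ 2))) with (Rpower (1 - u * t * L ^ 2) gamma).
        unfold A, c. simpl. field. repeat split; try lra.
        apply Rgt_not_eq, Rpower_pos'. unfold c in Hd. simpl in Hd. lra.
      * exact (RInt_correct (V:=C_R_CompleteNormedModule) h 0 1 Hex).
      * apply majorant; auto.
    + replace (- gamma * ln (1 - c)) with (- (gamma * ln (1 - t * L ^ 2))) by (unfold c; ring).
      rewrite exp_Ropp. change (exp (gamma * ln (1 - t * L ^ 2))) with (Rpower (1 - t * L ^ 2) gamma).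
      assert (HA : 0 <= A / gamma).
      { unfold A. apply Rmult_le_pos; [apply Rmult_le_pos|]. apply pow_le; auto.
        left; apply Rinv_0_lt_compat, Rmult_lt_0_compat; auto. apply pow_lt; auto.
        left; apply Rinv_0_lt_compat; auto. }
      apply Rle_trans with (A / gamma * / Rpower (1 - t * L ^ 2) gamma).
      * apply Rmult_le_compat_l; auto. lra.
      * right. unfold A, c. simpl. field. pose proof (Rpower_pos' (1 - t * (L * (L * 1))) gamma). repeat split; lra.
Qed.

Lemma pow_ratio (N M P : R) (m : nat) : 0 <= N -> N < M -> 0 < P ->
  N ^ S m / (M ^ S m * P) <= N / (M * P).
Proof.
  intros HN HM HP.
  assert (HMm : 0 < M ^ m) by (apply pow_lt; lra).
  assert (Hq : N ^ m / M ^ m <= 1).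
  { apply Rmult_le_reg_r with (M ^ m); auto. unfold Rdiv. rewrite Rmult_assoc, Rinv_l, Rmult_1_r, Rmult_1_l by lra.
    apply pow_incr; lra. }
  assert (HY : 0 <= N / (M * P)).
  { apply Rmult_le_pos; auto. left; apply Rinv_0_lt_compat, Rmult_lt_0_compat; lra. }
  replace (N ^ S m / (M ^ S m * P)) with (N / (M * P) * (N ^ m / M ^ m)).
  2:{ simpl. field. repeat split; lra. }
  rewrite <- (Rmult_1_r (N / (M * P))) at 2. apply Rmult_le_compat_l; auto.
Qed.

Lemma part_b (g' : C -> C) (gamma : R) (lam : C) :
  in_Bloch g' -> 0 < gamma -> lam <> RtoC 0 -> inD lam ->
  forall (n : nat) (a : nat -> C), gamma * Cmod lam > bloch_norm g' ->
     Cmod (sum_n (G := C_AbelianGroup)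
             (fun k => Cmult (a k) (Tgk g' k (f_gl gamma lam) lam)) n)
     <= Cmod (a 0%nat) * (Cmod lam / Rpower (1 - Cmod lam ^ 2) gamma)
        + sum_n_m (G := R_AbelianGroup) (fun k => Cmod (a k)) 1 n
          * (bloch_norm g' / (Cmod lam * gamma * Rpower (1 - Cmod lam ^ 2) gamma)).
Proof.
  intros HB Hg Hl0 HlD n a Hgt.
  pose proof (part_a g' gamma lam HB Hg Hl0 HlD) as Ha.
  destruct (bloch_facts g' HB) as [_ HN].
  assert (HL : 0 < Cmod lam) by (apply Cmod_gt_0; auto).
  assert (Hf : Cmod (f_gl gamma lam lam) = Cmod lam / Rpower (1 - Cmod lam ^ 2) gamma).
  { pose proof (f_gl_ray gamma 1 lam) as H. rewrite Cmult_1_l, !Rmult_1_l in H. apply H; auto. lra. }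
  assert (HT : forall k, Cmod (Tgk g' k (f_gl gamma lam) lam) <=
     bloch_norm g' ^ k / (Cmod lam ^ k * gamma ^ k * Rpower (1 - Cmod lam ^ 2) gamma)).
  { intros k. pose proof (Ha k 1) as H. rewrite Cmult_1_l, Rmult_1_l in H. apply H; lra. }
  set (N := bloch_norm g') in *. set (L := Cmod lam) in *.
  set (P := Rpower (1 - L ^ 2) gamma) in *.
  assert (HP : 0 < P) by apply Rpower_pos'.
  induction n as [|n IH].
  - rewrite sum_O, sum_n_m_zero by lia. simpl. rewrite Cmod_mult, Hf. fold L P. change (zero (G:=R_AbelianGroup)) with 0. lra.
  - rewrite sum_Sn, sum_n_Sm by lia.
    change (Cmod (Cplus (sum_n (G := C_AbelianGroup) (fun k => Cmult (a k) (Tgk g' k (f_gl gamma lam) lam)) n)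
                        (Cmult (a (S n)) (Tgk g' (S n) (f_gl gamma lam) lam))) <=
            Cmod (a 0%nat) * (L / P) +
            (sum_n_m (G := R_AbelianGroup) (fun k => Cmod (a k)) 1 n + Cmod (a (S n))) * (N / (L * gamma * P))).
    eapply Rle_trans; [apply Cmod_triangle|].
    rewrite Cmod_mult.
    assert (Hk : Cmod (Tgk g' (S n) (f_gl gamma lam) lam) <= N / (L * gamma * P)).
    { eapply Rle_trans; [apply HT|]. fold N L P.
      rewrite <- Rpow_mult_distr. rewrite (Rmult_comm L gamma). apply pow_ratio; auto; lra. }
    assert (0 <= Cmod (a (S n))) by apply Cmod_ge_0.
    pose proof (Rmult_le_compat_l _ _ _ H Hk). nra.
Qed.

Theorem lemma4p11 (g g' : C -> C) (gamma : R) (lam : C)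
  (Hder : forall z : C, inD z -> is_derive (K := C_AbsRing) (V := C_NormedModule) g z (g' z))
  (HB : in_Bloch g')
  (Hgamma : 0 < gamma) (Hlam0 : lam <> RtoC 0) (HlamD : inD lam) :
  (forall (k : nat) (t : R), 0 <= t <= 1 ->
     Cmod (Tgk g' k (f_gl gamma lam) (Cmult (RtoC t) lam))
     <= bloch_norm g' ^ k /
        (Cmod lam ^ k * gamma ^ k * Rpower (1 - t * Cmod lam ^ 2) gamma))
  /\
  (forall (n : nat) (a : nat -> C), gamma * Cmod lam > bloch_norm g' ->
     Cmod (sum_n (G := C_AbelianGroup)
             (fun k => Cmult (a k) (Tgk g' k (f_gl gamma lam) lam)) n)
     <= Cmod (a 0%nat) * (Cmod lam / Rpower (1 - Cmod lam ^ 2) gamma)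
        + sum_n_m (G := R_AbelianGroup) (fun k => Cmod (a k)) 1 n
          * (bloch_norm g' / (Cmod lam * gamma * Rpower (1 - Cmod lam ^ 2) gamma))).
Proof.
  split.
  - exact (part_a g' gamma lam HB Hgamma Hlam0 HlamD).
  - exact (part_b g' gamma lam HB Hgamma Hlam0 HlamD).
Qed.
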